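(* Let $G$ be a graph and $v\in V(G)$. Let $G^-$ be obtained from $G$ by adding a vertex $v^-$ with $N_{G^-}(v^-)=N_G(v)$, and $G^+$ be obtained by adding a vertex $v^+$ with $N_{G^+}(v^+)=N_G[v]$ (closed neighborhood). Let $\star\in\{+,-\}$, and if $\star=+$ assume $v$ is not an isolated vertex. Then $\mathcal{Z}^{\mathrm{TE}}_{\star}(G^{\star})\cong(\mathcal{Z}^{\mathrm{TE}}_{\star}(G)\,\square\,P_2)/\!\sim$, $\mathcal{Z}^{\mathrm{TS}}_+(G^+)\cong(\mathcal{Z}^{\mathrm{TS}}_+(G)\,\square\,P_2)/\!\sim$, and $\mathcal{Z}^{\mathrm{TS}}_-(G^-)\cong(2\mathcal{Z}^{\mathrm{TS}}_-(G))/\!\sim$, where $V(P_2)=\{v,v^\star\}$, the vertices of the two copies in $2\mathcal{Z}^{\mathrm{TS}}_-(G)$ are written $(B,v)$ and $(B,v^-)$ for $B$ a vertex of $\mathcal{Z}^{\mathrm{TS}}_-(G)$, and in each case $\sim$ is the equivalence relation identifying $(B,v)$ with $(B,v^{\star})$ if and only if $v\in B$.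
   Context: $\square$ denotes the Cartesian product and $2H$ the disjoint union of two copies of $H$. For an equivalence relation $\sim$ on $V(H)$, the quotient graph $H/\!\sim$ has the equivalence classes as vertices, with two distinct classes adjacent iff some member of one is adjacent in $H$ to some member of the other. PSD forcing ($\star=+$): if $B$ is the current blue set, $C$ a component of $G-B$, and $u$ a blue vertex with $N_G(u)\cap V(C)=\{w\}$, then $u$ may force $w$ blue. Skew forcing ($\star=-$): any vertex $u$ (blue or white) with exactly one white neighbor $w$ may force $w$ blue. A $\mathrm{Z}_\star$-forcing set is a (possibly empty) set of initially blue vertices from which repeated forcing turns all vertices blue; $\mathrm{Z}_\star(G)$ is the minimum size. $\mathcal{Z}^{\mathrm{TE}}_\star(G)$ has as vertices the minimum $\mathrm{Z}_\star$-forcing sets of $G$, with $S_1S_2$ an edge iff $S_1\setminus S_2=\{v_1\}$ and $S_2\setminus S_1=\{v_2\}$ for some vertices $v_1,v_2$; $\mathcal{Z}^{\mathrm{TS}}_\star(G)$ has the same vertices with the additional requirement $v_1v_2\in E(G)$. *)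

(* Defs.v *)
From mathcomp Require Import all_boot.
Set Implicit Arguments. Unset Strict Implicit. Unset Printing Implicit Defensive.

Inductive sign := Plus | Minus.

Section Forcing.
Variables (T : finType) (e : rel T).

(** vertices of the component of G - B containing w (empty if w is blue) *)
Definition white_comp (B : {set T}) (w : T) : {set T} :=
  [set y | (y \notin B) &&
     connect [rel a b | [&& e a b, a \notin B & b \notin B]] w y].

Definition can_force (s : sign) (B : {set T}) (u w : T) : bool :=
  match s with
  | Plus => [&& u \in B, w \notin B &
             [set y in white_comp B w | e u y] == [set w]]
  | Minus => [set y | e u y && (y \notin B)] == [set w]
  end.

Inductive forcing_closes (s : sign) : {set T} -> Prop :=
| fc_done B : B = setT -> forcing_closes s B
| fc_step B u w : can_force s B u w -> forcing_closes s (w |: B) ->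
    forcing_closes s B.

Definition forcing_set (s : sign) (S : {set T}) : Prop := forcing_closes s S.

Definition min_forcing_set (s : sign) (S : {set T}) : Prop :=
  forcing_set s S /\ forall S', forcing_set s S' -> #|S| <= #|S'|.

End Forcing.

(** G^-  (s = Minus): new vertex None with N(None) = N_G(v);
    G^+  (s = Plus) : new vertex None with N(None) = N_G[v]. *)
Definition ext_graph (T : finType) (e : rel T) (s : sign) (v : T)
  : rel (option T) :=
  fun x y =>
    match x, y with
    | Some a, Some b => e a b
    | None, Some b => e v b || (if s is Plus then b == v else false)
    | Some a, None => e v a || (if s is Plus then a == v else false)
    | None, None => false
    end.

Record graph := Graph { gV : Type; gadj : gV -> gV -> Prop }.
Arguments gadj : clear implicits.
Arguments Graph : clear implicits.

Definition graph_iso (G H : graph) : Prop :=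
  exists f : gV G -> gV H, bijective f /\
    forall x y, gadj G x y <-> gadj H (f x) (f y).

Definition cart (G H : graph) : graph :=
  @Graph (gV G * gV H)
    (fun p q => (gadj G p.1 q.1 /\ p.2 = q.2) \/ (p.1 = q.1 /\ gadj H p.2 q.2)).

(** P_2 on vertex set bool: false stands for v, true for v^star *)
Definition P2 : graph := @Graph bool (fun a b => a <> b).

(** disjoint union of two copies: (x,false) = (x,v), (x,true) = (x,v^-) *)
Definition two_copies (G : graph) : graph :=
  @Graph (gV G * bool) (fun p q => p.2 = q.2 /\ gadj G p.1 q.1).

Definition quotient_graph (G : graph) (R : gV G -> gV G -> Prop) : graph :=
  @Graph {P : gV G -> Prop | exists x, P = R x}
    (fun P Q => proj1_sig P <> proj1_sig Q /\
       exists x y, proj1_sig P x /\ proj1_sig Q y /\ gadj G x y).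

Definition ident_rel (T : finType) (P : {set T} -> Prop) (v : T)
  (p q : {S : {set T} | P S} * bool) : Prop :=
  p.1 = q.1 /\ (p.2 = q.2 \/ v \in proj1_sig p.1).

Definition ZTE (T : finType) (s : sign) (e : rel T) : graph :=
  @Graph {S : {set T} | min_forcing_set e s S}
    (fun S1 S2 => exists v1 v2,
       proj1_sig S1 :\: proj1_sig S2 = [set v1] /\
       proj1_sig S2 :\: proj1_sig S1 = [set v2]).

Definition ZTS (T : finType) (s : sign) (e : rel T) : graph :=
  @Graph {S : {set T} | min_forcing_set e s S}
    (fun S1 S2 => exists v1 v2,
       [/\ proj1_sig S1 :\: proj1_sig S2 = [set v1],
           proj1_sig S2 :\: proj1_sig S1 = [set v2] & e v1 v2]).

(* Main.v *)
Require Import Defs.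
From mathcomp Require Import all_boot.
From Stdlib Require Import ProofIrrelevance FunctionalExtensionality PropExtensionality ClassicalEpsilon.
Set Implicit Arguments. Unset Strict Implicit. Unset Printing Implicit Defensive.


Lemma sig_eqP (X : Type) (P : X -> Prop) (a b : {x | P x}) :
  proj1_sig a = proj1_sig b -> a = b.
Proof. case: a b => [a pa] [b pb] /= eab; subst b; f_equal; apply: proof_irrelevance. Qed.

Lemma iso_gen (X : Type) (Pst : X -> Prop) (adjst : X -> X -> Prop)
  (H : graph) (R : gV H -> gV H -> Prop) (phi : gV H -> X) :
  (forall p, R p p) ->
  (forall S, Pst S -> exists p, S = phi p) ->
  (forall p, Pst (phi p)) ->
  (forall p q, phi p = phi q <-> R p q) ->
  (forall p q, adjst (phi p) (phi q) <->
     (phi p <> phi q /\ exists p' q', phi p' = phi p /\ phi q' = phi q /\ gadj H p' q')) ->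
  graph_iso (@Graph {S | Pst S} (fun S1 S2 => adjst (proj1_sig S1) (proj1_sig S2)))
    (quotient_graph R).
Proof.
move=> Rrefl Hsurj Hin Hinj Hadj.
have Req : forall p q, phi p = phi q -> R p = R q.
  move=> p q epq; apply: functional_extensionality => x;
  apply: propositional_extensionality; rewrite -!Hinj; split=> h; congruence.
have pick : forall S : {S | Pst S}, {p | proj1_sig S = phi p}.
  move=> S; apply: constructive_indefinite_description; exact: Hsurj (proj2_sig S).
pose f (S : {S | Pst S}) : gV (quotient_graph R) :=
  exist (fun Q => exists x, Q = R x) (R (proj1_sig (pick S))) (ex_intro _ _ erefl).
have pickQ : forall Q : gV (quotient_graph R), {x | proj1_sig Q = R x}.
  move=> Q; apply: constructive_indefinite_description; exact: proj2_sig Q.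
pose g (Q : gV (quotient_graph R)) : {S | Pst S} :=
  exist Pst (phi (proj1_sig (pickQ Q))) (Hin _).
exists f; split.
  exists g.
    move=> S; apply: sig_eqP => /=.
    case: (pickQ _) => x /= hx; case: (pick S) hx => p /= -> hx.
    apply/Hinj; rewrite -hx; exact: Rrefl.
  move=> Q; apply: sig_eqP => /=.
  case: (pick _) => p /= hp; case: (pickQ Q) hp => x /= hx hp.
  by rewrite hx; apply: Req.
move=> S1 S2 /=.
case: (pick S1) => p1 /= e1; case: (pick S2) => p2 /= e2.
rewrite e1 e2 Hadj; split.
  case=> ne [p' [q' [h1 [h2 h3]]]]; split.
    by move=> eR; apply: ne; apply/Hinj; rewrite eR.
  exists p', q'; split; first by apply/Hinj.
  by split; first apply/Hinj.
case=> ne [p' [q' [h1 [h2 h3]]]]; split.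
  by move=> ephi; apply: ne; apply: Req.
exists p', q'; split; first by symmetry; apply/Hinj.
by split; first by symmetry; apply/Hinj.
Qed.

Lemma connect_hom (U V : finType) (r1 : rel U) (r2 : rel V) (f : U -> V) :
  (forall x y, r1 x y -> r2 (f x) (f y)) ->
  forall a b, connect r1 a b -> connect r2 (f a) (f b).
Proof.
move=> h a b /connectP [p pth ->]; elim: p a pth => [|c p IH] a /=.
  by rewrite connect0.
case/andP=> h1 h2; apply: connect_trans (connect1 (h _ _ h1)) (IH _ h2).
Qed.


Lemma mem_inv (U : finType) (f : U -> U) (fK : involutive f) (A : {set U}) y :
  (y \in f @: A) = (f y \in A).
Proof.
apply/imsetP/idP => [[x xA ->]|h]; first by rewrite fK.
by exists (f y); rewrite ?fK.
Qed.

Lemma forcing_inv (U : finType) (r : rel U) (f : U -> U) (fK : involutive f)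
  (hr : forall x y, r (f x) (f y) = r x y) s B :
  forcing_closes r s B -> forcing_closes r s (f @: B).
Proof.
have hr' : forall x y, r (f x) y = r x (f y) by move=> x y; rewrite -{1}(fK y) hr.
elim=> {B} [B -> | B u w hc _ IH].
  by apply: fc_done; apply/setP => y; rewrite ((mem_inv fK)) !in_setT.
apply: (fc_step (u := f u) (w := f w)); last by rewrite -imsetU1.
clear IH; case: s hc => /=.
  case/and3P=> uB wB /eqP hc; rewrite !(mem_inv fK) !fK uB wB /=.
  have wcinv : white_comp r (f @: B) (f w) = f @: white_comp r B w.
    apply/setP=> y; rewrite (mem_inv fK) !inE (mem_inv fK); congr (_ && _).
    apply/idP/idP => h.
      have := connect_hom (r2 := [rel a b | [&& r a b, a \notin B & b \notin B]]) (f := f) _ h.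
      rewrite fK; apply=> x0 y0 /=; by rewrite !(mem_inv fK) hr.
    have := connect_hom (r2 := [rel a b | [&& r a b, a \notin f @: B & b \notin f @: B]]) (f := f) _ h.
    rewrite fK; apply=> x0 y0 /=; by rewrite !(mem_inv fK) !fK hr.
  rewrite wcinv; apply/eqP; rewrite -imset_set1 -hc; apply/setP=> y.
  set C := white_comp r B w; clearbody C; by rewrite (mem_inv fK) !in_set (mem_inv fK) hr'.
move/eqP=> hc; apply/eqP; rewrite -imset_set1 -hc; apply/setP=> y.
by rewrite (mem_inv fK) !in_set (mem_inv fK) hr'.
Qed.


Section Ext.
Variables (T : finType) (e : rel T) (v : T).
Hypotheses (e_sym : symmetric e) (e_irr : irreflexive e).
Local Notation E s := (ext_graph e s v).

Definition sw (o : option T) : option T :=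
  match o with None => Some v | Some x => if x == v then None else Some x end.

Lemma swK : involutive sw.
Proof.
case=> [x|] /=; last by rewrite eqxx.
by have [->|nx] := eqVneq x v; rewrite /= ?eqxx // (negbTE nx).
Qed.

Lemma sw_e s x y : E s (sw x) (sw y) = E s x y.
Proof.
case: s; case: x => [a|]; case: y => [b|] /=;
  try (have [->|na] := eqVneq a v); try (have [->|nb] := eqVneq b v);
  rewrite /= ?eqxx ?e_irr ?orbF ?orbT //;
  try rewrite (negbTE na); try rewrite (negbTE nb);
  rewrite /= ?eqxx ?e_irr ?orbF ?orbT //; try by rewrite e_sym.
Qed.

Definition lift (B : {set T}) : {set option T} :=
  [set o | if o is Some x then x \in B else true].
Definition pull (S : {set option T}) : {set T} := [set x | Some x \in S].

Lemma mem_Some (C : {set T}) x : (Some x \in Some @: C) = (x \in C).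
Proof. exact: mem_imset (@Some_inj _). Qed.

Lemma None_Some (C : {set T}) : (None \in Some @: C) = false.
Proof. by apply/imsetP => -[]. Qed.

Lemma setSome_eq (X : {set T}) w : Some @: X = [set Some w] -> X = [set w].
Proof. by rewrite -imset_set1 => /(imset_inj (@Some_inj _)). Qed.

Lemma lift_pull (S : {set option T}) : None \in S -> lift (pull S) = S.
Proof. by move=> NS; apply/setP => -[x|]; rewrite !inE. Qed.

Lemma pull_lift B : pull (lift B) = B.
Proof. by apply/setP => x; rewrite !inE. Qed.

Lemma None_lift B : None \in lift B.
Proof. by rewrite inE. Qed.

Lemma wc_some s (S : {set option T}) w : None \in S ->
  white_comp (E s) S (Some w) = Some @: white_comp e (pull S) w.
Proof.
move=> NS; apply/setP => -[x|]; last first.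
  by rewrite None_Some /white_comp in_set NS.
rewrite mem_Some /white_comp !in_set; congr (_ && _).
apply/idP/idP => h.
  have := connect_hom (r2 := [rel a b | [&& e a b, a \notin pull S & b \notin pull S]])
           (f := fun o => odflt v o) _ h; apply.
  by move=> [a|] [b|] //=; rewrite ?NS ?andbF // !inE.
have := connect_hom (r2 := [rel a b | [&& E s a b, a \notin S & b \notin S]])
           (f := Some) _ h; apply.
by move=> a b /=; rewrite !inE.
Qed.

Lemma F1 s B : forcing_closes e s B -> forcing_closes (E s) s (lift B).
Proof.
elim=> {B} [B -> | B u w hc _ IH].
  by apply: fc_done; apply/setP => -[x|]; rewrite !inE.
apply: (fc_step (u := Some u) (w := Some w)).
  clear IH; case: s hc => /=.
    case/and3P=> uB wB /eqP hc; rewrite !inE uB wB /=.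
    rewrite wc_some ?None_lift // pull_lift.
    move: hc; set C := white_comp e B w; clearbody C => hc.
    apply/eqP; rewrite -imset_set1 -hc; apply/setP => -[x|].
      by rewrite mem_Some !in_set mem_Some.
    by rewrite None_Some in_set None_Some.
  move/eqP=> hc; apply/eqP; rewrite -imset_set1 -hc; apply/setP => -[x|].
    by rewrite mem_Some !inE.
  by rewrite None_Some !inE andbF.
suff -> : Some w |: lift B = lift (w |: B) by [].
by apply/setP => -[x|]; rewrite !inE.
Qed.

Lemma mem_sep (U : finType) (A : {set U}) (p : pred U) x :
  (x \in [set y in A | p y]) = (x \in A) && p x.
Proof. by rewrite inE. Qed.

Lemma wc_step (B : {set T}) a y : y \in white_comp e B a -> y != a ->
  exists z, z \in white_comp e B a /\ e a z.
Proof.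
rewrite inE => /andP [yB /connectP [p pth ->]].
case: p pth => [|z p] /=; first by rewrite eqxx.
case/andP => /and3P [eaz aB zB] _ _; exists z; split => //.
by rewrite inE zB /=; apply: connect1; rewrite /= eaz aB zB.
Qed.

Lemma F2 s (S : {set option T}) : (s = Plus -> exists u, e v u) ->
  forcing_closes (E s) s S -> None \in S -> forcing_closes e s (pull S).
Proof.
move=> hs; elim=> {S} [S -> | S u w hc _ IH] NS.
  by apply: fc_done; apply/setP => x; rewrite !inE.
have wS : w \notin S.
  case: s hs hc {IH} => _ /=; first by case/and3P.
  by move/eqP/setP/(_ w); rewrite !inE eqxx => /andP [].
case: w hc wS IH => [w|] hc wS IH; last by rewrite NS in wS.
have /IH : None \in Some w |: S by rewrite !inE NS orbT.
have -> : pull (Some w |: S) = w |: pull S by apply/setP => x; rewrite !inE.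
move=> IH'; clear IH.
have wP : w \notin pull S by rewrite inE.
case: s hs hc IH' => hs hc IH'.
- case/and3P: hc => uS _ /eqP hc; rewrite wc_some // in hc.
  have wcw : w \in white_comp e (pull S) w by rewrite inE wP connect0.
  move: hc wcw; set C := white_comp e (pull S) w => hc wcw.
  case: u uS hc => [u|] uS hc.
  + apply: (fc_step (u := u) (w := w)) IH'.
    rewrite /= inE uS wP /=; apply/eqP/setSome_eq; rewrite -hc; apply/setP => -[x|].
      by rewrite mem_Some !mem_sep mem_Some.
    by rewrite None_Some mem_sep None_Some.
  + have hcP x : (x \in C) && (e v x || (x == v)) = (x == w).
      by move: hc => /setP/(_ (Some x)); rewrite mem_sep mem_Some in_set1 /=.
    case vP: (v \in pull S).
    * apply: (fc_step (u := v) (w := w)) IH'.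
      rewrite /= vP wP /=; apply/eqP/setP => x; rewrite mem_sep in_set1 -hcP.
      case xC: (x \in C) => //=.
      have : x != v by apply: contraTneq xC => ->; rewrite inE vP.
      by move/negbTE ->; rewrite orbF.
    * have [ewv|nwv] := eqVneq w v.
      - subst w; case: (hs erefl) => u0 eu0.
        have noN : forall z, z \in C -> e v z -> False.
          move=> z zC evz; have := hcP z; rewrite zC evz /= => /esym/eqP ezv.
          by subst z; rewrite e_irr in evz.
        have u0P : u0 \in pull S.
          apply/negPn/negP => u0n; refine (noN u0 _ eu0); rewrite inE u0n /=.
          by apply: connect1; rewrite /= eu0 vP u0n.
        apply: (fc_step (u := u0) (w := v)) IH'.
        rewrite /= u0P wP /=; apply/eqP/setP => x; rewrite mem_sep in_set1.
        have [->|nxv] := eqVneq x v; first by rewrite wcw e_sym eu0.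
        case xC: (x \in C) => //=.
        by case: (wc_step xC nxv) => z [zC evz]; case: (noN z zC evz).
      - exfalso.
        have evw : e v w by have := hcP w; rewrite wcw eqxx (negbTE nwv) orbF.
        have vC : v \in C.
          rewrite inE vP /=; apply: connect1; by rewrite /= e_sym evw wP vP.
        by have := hcP v; rewrite vC eqxx orbT eq_sym (negbTE nwv).
- move/eqP: hc => hc.
  apply: (fc_step (u := odflt v u) (w := w)) IH'.
  apply/eqP/setSome_eq; rewrite -hc; apply/setP => -[x|].
    by rewrite mem_Some !inE; case: u {hc} => [u|] /=; rewrite ?orbF.
  by rewrite None_Some !inE NS andbF.
Qed.

Lemma F3 s (S : {set option T}) : forcing_closes (E s) s S ->
  (None \in S) || (Some v \in S).
Proof.
elim=> {S} [S -> | S u w hc _ IH]; first by rewrite !inE.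
case NS: (None \in S) => //=; case VS: (Some v \in S) => //.
exfalso.
have hw : (w = None) \/ (w = Some v).
  by move: IH; rewrite !in_setU1 NS VS !orbF => /orP [/eqP <-|/eqP <-]; [left|right].
case: s hc => /=.
- case/and3P => uS wS /eqP hc.
  have hcP y : (y \in white_comp (E Plus) S w) && E Plus u y = (y == w)
    by rewrite -mem_sep hc in_set1.
  case: u uS hc hcP => [a|] uS _ hcP; last by rewrite NS in uS.
  have av : a != v by apply: contraTneq uS => ->; rewrite VS.
  have [b1 b2] : None \in white_comp (E Plus) S w /\ Some v \in white_comp (E Plus) S w.
    case: hw => ->; split; rewrite /white_comp in_set ?NS ?VS /= ?connect0 //;
    apply: connect1; by rewrite /= ?NS ?VS eqxx ?orbT.
  have h1 := hcP None; have h2 := hcP (Some v).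
  rewrite b1 in h1; rewrite b2 in h2.
  move: h1 h2; rewrite /= (negbTE av) orbF (e_sym a).
  have sN : (Some v == None) = false by []. have Ns : (None == Some v) = false by [].
  by case: hw => ->; case: (e v a); rewrite ?sN ?Ns ?eqxx.
- move/eqP/setP => hc.
  have h1 := hc None; have h2 := hc (Some v).
  rewrite !inE NS VS !andbT in h1 h2; clear hc.
  have sN : (Some v == None) = false by []. have Ns : (None == Some v) = false by [].
  case: hw => ?; subst w; case: u h1 h2 => [a|] /=;
    rewrite ?orbF ?e_irr ?eqxx ?sN ?Ns ?(e_sym a) //; by move=> ->.
Qed.

Definition phi (B : {set T}) (b : bool) : {set option T} :=
  if b then sw @: lift B else lift B.

Lemma mem_phi B b o : (o \in phi B b) =
  match o with None => ~~ b || (v \in B) | Some x => (b && (x == v)) || (x \in B) end.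
Proof.
case: b => /=; last by case: o => [x|]; rewrite inE.
rewrite (mem_inv swK); case: o => [x|] /=; last by rewrite inE.
by have [->|nx] := eqVneq x v; rewrite ?eqxx ?(negbTE nx) inE.
Qed.

Lemma card_lift B : #|lift B| = #|B|.+1.
Proof.
have -> : lift B = None |: Some @: B.
  by apply/setP => -[x|]; rewrite in_setU1 ?mem_Some ?None_Some in_set.
by rewrite cardsU1 None_Some card_imset //; exact: Some_inj.
Qed.

Lemma card_phi B b : #|phi B b| = #|B|.+1.
Proof. by case: b => /=; rewrite ?card_imset ?card_lift //; exact: (inv_inj swK). Qed.

Lemma forcing_phi s B b : forcing_closes e s B -> forcing_closes (E s) s (phi B b).
Proof.
move/F1 => h; case: b => //=; exact: (forcing_inv swK (sw_e s) h).
Qed.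

Lemma red s S : (s = Plus -> exists u, e v u) -> forcing_closes (E s) s S ->
  exists B b, forcing_closes e s B /\ S = phi B b.
Proof.
move=> hs fS; case/orP: (F3 fS) => [NS|VS].
  by exists (pull S), false; split; [exact: F2 | rewrite /= lift_pull].
have NS' : None \in sw @: S by rewrite (mem_inv swK).
have fS' := forcing_inv swK (sw_e s) fS.
exists (pull (sw @: S)), true; split; first exact: F2 hs fS' NS'.
by rewrite /phi lift_pull //; apply/setP => o; rewrite !(mem_inv swK) swK.
Qed.

Lemma min_char s S : (s = Plus -> exists u, e v u) ->
  (min_forcing_set (E s) s S <-> exists B b, min_forcing_set e s B /\ S = phi B b).
Proof.
move=> hs; split.
  case=> fS minS; case: (red hs fS) => B [b [fB eS]]; subst S; exists B, b; split => //.
  split => // B' fB'.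
  by have := minS _ (forcing_phi false fB'); rewrite !card_phi.
case=> B [b [[fB minB] ->]]; split; first exact: forcing_phi.
move=> S' fS'; case: (red hs fS') => B' [b' [fB' ->]].
by rewrite !card_phi ltnS; exact: minB.
Qed.

Lemma phi_inj B1 B2 b1 b2 :
  phi B1 b1 = phi B2 b2 <-> B1 = B2 /\ (b1 = b2 \/ v \in B1).
Proof.
split.
  move/setP => E'.
  have eB : B1 = B2.
    apply/setP => x; have [->|nx] := eqVneq x v.
      have E1 := E' None; have E2 := E' (Some v); rewrite !mem_phi eqxx in E1 E2.
      clear E'; by case: b1 b2 (v \in B1) (v \in B2) E1 E2 => [] [] [] [].
    by have := E' (Some x); rewrite !mem_phi (negbTE nx) !andbF.
  subst B2; split => //.
  have E1 := E' None; have E2 := E' (Some v); rewrite !mem_phi eqxx in E1 E2.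
  clear E'; case: b1 b2 (v \in B1) E1 E2 => [] [] [] /= E1 E2; try discriminate; by [left | right].
case=> <- [<-|vB] //.
apply/setP => -[x|]; rewrite !mem_phi ?vB ?orbT //.
by have [->|_] := eqVneq x v; rewrite ?vB ?orbT ?andbF.
Qed.

Definition tr (b : bool) (o : option T) := if b then sw o else o.

Lemma tr_e s b x y : E s (tr b x) (tr b y) = E s x y.
Proof. by case: b => //=; rewrite sw_e. Qed.

Lemma E_sym s x y : E s x y = E s y x.
Proof. by case: x => [a|]; case: y => [b|] //=; rewrite e_sym. Qed.

Lemma diff_lift B1 B2 : lift B1 :\: lift B2 = Some @: (B1 :\: B2).
Proof.
apply/setP => -[x|]; rewrite in_setD ?mem_Some ?None_Some !in_set //.
Qed.

Lemma diff_inv (Y1 Y2 : {set option T}) : sw @: Y1 :\: sw @: Y2 = sw @: (Y1 :\: Y2).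
Proof. by apply/setP => o; rewrite in_setD !(mem_inv swK) in_setD. Qed.

Lemma diff_phi B1 B2 b : phi B1 b :\: phi B2 b =
  if b then sw @: (Some @: (B1 :\: B2)) else Some @: (B1 :\: B2).
Proof. by case: b => /=; rewrite ?diff_inv diff_lift. Qed.

Lemma single_Some (X : {set T}) o : Some @: X = [set o] -> exists x, o = Some x /\ X = [set x].
Proof.
move=> h; have : o \in Some @: X by rewrite h in_set1.
case/imsetP => x _ eo; subst o; exists x; split => //; exact: setSome_eq.
Qed.

Lemma single_sw (Y : {set option T}) o : sw @: Y = [set o] -> Y = [set sw o].
Proof.
move=> h; apply/setP => y; rewrite in_set1 -{1}(swK y) -(mem_inv swK) h in_set1.
by rewrite -[sw y == o](inj_eq (inv_inj swK)) swK.
Qed.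

Lemma SB (B1 B2 : {set T}) b o1 o2 : phi B1 b :\: phi B2 b = [set o1] ->
  phi B2 b :\: phi B1 b = [set o2] ->
  exists x1 x2, [/\ B1 :\: B2 = [set x1], B2 :\: B1 = [set x2],
                    o1 = tr b (Some x1) & o2 = tr b (Some x2)].
Proof.
rewrite !diff_phi; case: b => /= h1 h2.
  move/single_sw: h1 => /single_Some [x1 [eo1 d1]].
  move/single_sw: h2 => /single_Some [x2 [eo2 d2]].
  by exists x1, x2; split => //; rewrite -[if _ then _ else _]/(sw (Some _)) -?eo1 -?eo2 swK.
move/single_Some: h1 => [x1 [eo1 d1]]; move/single_Some: h2 => [x2 [eo2 d2]].
by exists x1, x2.
Qed.

Lemma SB' (B1 B2 : {set T}) b x1 x2 : B1 :\: B2 = [set x1] -> B2 :\: B1 = [set x2] ->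
  phi B1 b :\: phi B2 b = [set tr b (Some x1)] /\
  phi B2 b :\: phi B1 b = [set tr b (Some x2)].
Proof. by move=> h1 h2; rewrite !diff_phi h1 h2 !imset_set1; case: b. Qed.

Lemma CB (B1 B2 : {set T}) o1 o2 : v \notin B1 -> v \notin B2 ->
  phi B1 false :\: phi B2 true = [set o1] -> phi B2 true :\: phi B1 false = [set o2] ->
  [/\ B1 = B2, o1 = None & o2 = Some v].
Proof.
move=> n1 n2 /setP h1 /setP h2.
have eo1 : o1 = None.
  have := h1 None; rewrite in_setD !mem_phi /= (negbTE n2) in_set1 => /esym/eqP.
  by move=> ->.
have eo2 : o2 = Some v.
  have := h2 (Some v); rewrite in_setD !mem_phi /= eqxx (negbTE n1) in_set1 => /esym/eqP.
  by move=> ->.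
split => //; apply/setP => x; have [->|nx] := eqVneq x v.
  by rewrite (negbTE n1) (negbTE n2).
have := h1 (Some x); have := h2 (Some x); rewrite !in_setD !mem_phi eo1 eo2 !in_set1 /=.
have -> : (Some x == Some v) = false by rewrite (inj_eq (@Some_inj _)) (negbTE nx).
have -> : (Some x == None) = false by [].
rewrite (negbTE nx) /=; by case: (x \in B1) (x \in B2) => [] [].
Qed.

Lemma CB' (B : {set T}) : v \notin B ->
  phi B false :\: phi B true = [set None] /\ phi B true :\: phi B false = [set Some v].
Proof.
move=> nB; split; apply/setP => -[x|]; rewrite in_setD !mem_phi in_set1 /=.
- have -> : (Some x == None) = false by [].
  by case: (x \in B); rewrite ?orbT ?andbF.
- by rewrite nB.
- rewrite (inj_eq (@Some_inj _)).
  by have [->|nx] := eqVneq x v; rewrite ?(negbTE nB) //=; case: (x \in B).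
- by [].
Qed.

Lemma core (Ed : rel (option T)) (EdG : rel T)
  (hEd : forall b x y, Ed (tr b (Some x)) (tr b (Some y)) = EdG x y)
  (hEsym : forall x y, Ed x y = Ed y x) (B1 B2 : {set T}) b1 b2 :
  (exists o1 o2, [/\ phi B1 b1 :\: phi B2 b2 = [set o1],
                     phi B2 b2 :\: phi B1 b1 = [set o2] & Ed o1 o2])
  <-> (phi B1 b1 <> phi B2 b2 /\ exists b1' b2',
        [/\ phi B1 b1' = phi B1 b1, phi B2 b2' = phi B2 b2 &
         ((b1' = b2' /\ exists x1 x2,
              [/\ B1 :\: B2 = [set x1], B2 :\: B1 = [set x2] & EdG x1 x2]) \/
          (B1 = B2 /\ b1' <> b2' /\ Ed None (Some v)))]).
Proof.
split.
  case=> o1 [o2 [h1 h2 hE]]; split.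
    move=> eq; move: h1; rewrite eq setDv => /setP/(_ o1).
    by rewrite !inE eqxx.
  have same : forall b, phi B1 b = phi B1 b1 -> phi B2 b = phi B2 b2 ->
    exists b1' b2', [/\ phi B1 b1' = phi B1 b1, phi B2 b2' = phi B2 b2 &
         ((b1' = b2' /\ exists x1 x2,
              [/\ B1 :\: B2 = [set x1], B2 :\: B1 = [set x2] & EdG x1 x2]) \/
          (B1 = B2 /\ b1' <> b2' /\ Ed None (Some v)))].
    move=> b e1 e2; rewrite -e1 -e2 in h1 h2.
    case: (SB h1 h2) => x1 [x2 [d1 d2 eo1 eo2]].
    exists b, b; split => //; left; split => //; exists x1, x2; split => //.
    by rewrite -(hEd b) -eo1 -eo2.
  have [eb|nb] := eqVneq b1 b2; first by subst b2; apply: (same b1).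
  case v1: (v \in B1).
    by apply: (same b2) => //; apply/phi_inj; split => //; right.
  case v2: (v \in B2).
    by apply: (same b1) => //; apply/phi_inj; split => //; right.
  exists b1, b2; split => //; right.
  clear same; case: b1 b2 nb h1 h2 hE => [] [] // _ h1 h2 hE.
    case: (CB (negbT v2) (negbT v1) h2 h1) => eB eo2 eo1; subst o1 o2.
    by split => //; split => //; rewrite hEsym.
  case: (CB (negbT v1) (negbT v2) h1 h2) => eB eo1 eo2; subst o1 o2.
  by split => //; split.
case=> ne [b1' [b2' [e1 e2 [[eb [x1 [x2 [d1 d2 hE]]]] | [eB [nb hE]]]]]].
  subst b2'; rewrite -e1 -e2; case: (SB' b1' d1 d2) => h1 h2.
  by exists (tr b1' (Some x1)), (tr b1' (Some x2)); split => //; rewrite hEd.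
subst B2; rewrite -e1 -e2 in ne *.
have nB : v \notin B1.
  by apply/negP => vB; apply: ne; apply/phi_inj; split => //; right.
case: (CB' nB) => h1 h2.
case: b1' b2' nb {e1 e2 ne} => [] [] // _.
  by exists (Some v), None; split => //; rewrite hEsym.
by exists None, (Some v); split.
Qed.

Lemma iso_main s (hs : s = Plus -> exists u, e v u) (Ed : rel (option T)) (EdG : rel T)
  (hEd : forall b x y, Ed (tr b (Some x)) (tr b (Some y)) = EdG x y)
  (hEsym : forall x y, Ed x y = Ed y x)
  (adjS : {set option T} -> {set option T} -> Prop)
  (hadjS : forall A1 A2, adjS A1 A2 <-> exists o1 o2,
     [/\ A1 :\: A2 = [set o1], A2 :\: A1 = [set o2] & Ed o1 o2])
  (adjH : ({S | min_forcing_set e s S} * bool) -> ({S | min_forcing_set e s S} * bool) -> Prop)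
  (hH : forall p q, adjH p q <->
     ((exists x1 x2, [/\ proj1_sig p.1 :\: proj1_sig q.1 = [set x1],
                        proj1_sig q.1 :\: proj1_sig p.1 = [set x2] & EdG x1 x2]) /\ p.2 = q.2)
     \/ (p.1 = q.1 /\ p.2 <> q.2 /\ Ed None (Some v))) :
  graph_iso (@Graph {S | min_forcing_set (E s) s S}
               (fun S1 S2 => adjS (proj1_sig S1) (proj1_sig S2)))
    (quotient_graph (G := @Graph _ adjH) (ident_rel (P := min_forcing_set e s) v)).
Proof.
apply: (iso_gen (phi := fun p : gV (@Graph _ adjH) => phi (proj1_sig p.1) p.2)).
- by move=> p; split => //; left.
- move=> S /(min_char S hs) [B [b [mB ->]]]; by exists (exist _ B mB, b).
- move=> p; apply/(min_char _ hs); exists (proj1_sig p.1), p.2; split => //.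
  exact: proj2_sig.
- move=> [[B1 m1] b1] [[B2 m2] b2] /=; rewrite phi_inj /ident_rel /=; split.
    by case=> eB h; subst B2; split => //; apply: sig_eqP.
  by case=> ee h; split => //; exact: (congr1 (@proj1_sig _ _) ee).
- move=> [[B1 m1] b1] [[B2 m2] b2] /=; rewrite hadjS core //; split.
    case=> ne [b1' [b2' [e1 e2 H]]]; split => //.
    exists (exist _ B1 m1, b1'), (exist _ B2 m2, b2'); split => //; split => //.
    apply/hH => /=; case: H => [[eb hx]|[eB [nb hE]]].
      by left; split.
    by right; split => //; subst B2; apply: sig_eqP.
  case=> ne [[[B1' m1'] b1'] [[[B2' m2'] b2'] [e1 [e2 H]]]]; split => //.
  simpl in e1, e2.
  have eB1 : B1' = B1 by case/phi_inj: e1.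
  have eB2 : B2' = B2 by case/phi_inj: e2.
  subst B1' B2'; exists b1', b2'; split => //.
  move/hH: H => /= [[hx eb]|[ee [nb hE]]]; first by left.
  by right; split => //; exact: (congr1 (@proj1_sig _ _) ee).
Qed.

End Ext.


Theorem theorem6p14 (T : finType) (e : rel T)
  (e_sym : symmetric e) (e_irr : irreflexive e) (v : T) :
  (forall s : sign, (s = Plus -> exists u, e v u) ->
     graph_iso (ZTE s (ext_graph e s v))
       (quotient_graph (G := cart (ZTE s e) P2)
          (ident_rel (P := min_forcing_set e s) v)))
  /\ ((exists u, e v u) ->
     graph_iso (ZTS Plus (ext_graph e Plus v))
       (quotient_graph (G := cart (ZTS Plus e) P2)
          (ident_rel (P := min_forcing_set e Plus) v)))
  /\ graph_iso (ZTS Minus (ext_graph e Minus v))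
       (quotient_graph (G := two_copies (ZTS Minus e))
          (ident_rel (P := min_forcing_set e Minus) v)).
Proof.
split; [|split].
- move=> s hs.
  apply: (@iso_main T e v e_sym e_irr s hs (fun _ _ => true) (fun _ _ => true) _ _
    (fun A1 A2 => exists v1 v2, A1 :\: A2 = [set v1] /\ A2 :\: A1 = [set v2]) _
    (gadj (cart (ZTE s e) P2))) => //.
  + move=> A1 A2; split.
      by case=> o1 [o2 [h1 h2]]; exists o1, o2; split.
    by case=> o1 [o2 [h1 h2 _]]; exists o1, o2; split.
  + move=> p q /=; split.
      case=> [[[x1 [x2 [h1 h2]]] eb]|[ee nb]].
        by left; split => //; exists x1, x2; split.
      by right.
    case=> [[[x1 [x2 [h1 h2 _]]] eb]|[ee [nb _]]].
      by left; split => //; exists x1, x2; split.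
    by right.
- move=> hs.
  apply: (@iso_main T e v e_sym e_irr Plus (fun _ => hs) (ext_graph e Plus v) e _ _
    (fun A1 A2 => exists v1 v2,
       [/\ A1 :\: A2 = [set v1], A2 :\: A1 = [set v2] & ext_graph e Plus v v1 v2]) _
    (gadj (cart (ZTS Plus e) P2))).
  + by move=> b x y; rewrite tr_e.
  + exact: E_sym.
  + by [].
  + move=> p q /=; split.
      case=> [[[x1 [x2 [h1 h2 h3]]] eb]|[ee nb]].
        by left; split => //; exists x1, x2; split.
      by right; split => //; split => //=; rewrite eqxx orbT.
    case=> [[[x1 [x2 [h1 h2 h3]]] eb]|[ee [nb _]]].
      by left; split => //; exists x1, x2; split.
    by right.
- have hs : Minus = Plus -> exists u, e v u by [].
  apply: (@iso_main T e v e_sym e_irr Minus hs (ext_graph e Minus v) e _ _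
    (fun A1 A2 => exists v1 v2,
       [/\ A1 :\: A2 = [set v1], A2 :\: A1 = [set v2] & ext_graph e Minus v v1 v2]) _
    (gadj (two_copies (ZTS Minus e)))).
  + by move=> b x y; rewrite tr_e.
  + exact: E_sym.
  + by [].
  + move=> p q /=; split.
      case=> eb [x1 [x2 [h1 h2 h3]]].
      by left; split => //; exists x1, x2; split.
    case=> [[[x1 [x2 [h1 h2 h3]]] eb]|[ee [nb hE]]].
      by split => //; exists x1, x2; split.
    by rewrite e_irr in hE.
Qed.
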